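(* There exist commutative rings $R_1$ and $R_2$ with $R_1 = 0$ (the zero ring) such that $R = R_1 \times R_2$ is a commutative weakly tripotent ring, but $R_2$ is not a tripotent ring of characteristic three.
   Context: All rings are associative with identity $1$. An element $a$ of a ring $R$ is tripotent if $a^3 = a$; a ring is tripotent if every element is tripotent. An element $a$ of $R$ is weakly tripotent if $a^3 = a$ or $(1+a)^3 = 1+a$; a ring $R$ is weakly tripotent if every element of $R$ is weakly tripotent. *)

(* Defs.v *)
From HB Require Import structures.
From mathcomp Require Import all_boot all_order all_algebra.
Set Implicit Arguments. Unset Strict Implicit. Unset Printing Implicit Defensive.
Import GRing.Theory.
Local Open Scope ring_scope.

Definition tripotent_elt (R : pzRingType) (a : R) : Prop := a ^+ 3 = a.
Definition tripotent_ring (R : pzRingType) : Prop := forall a : R, tripotent_elt a.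
Definition weakly_tripotent_elt (R : pzRingType) (a : R) : Prop :=
  tripotent_elt a \/ tripotent_elt (1 + a).
Definition weakly_tripotent_ring (R : pzRingType) : Prop :=
  forall a : R, weakly_tripotent_elt a.
(* R has characteristic n: the kernel of Z -> R restricted to nat is nZ,
   i.e. n is the least positive m with m%:R = 0 (or 0 if there is none). *)
Definition has_char (R : pzRingType) (n : nat) : Prop :=
  forall m : nat, (m%:R == 0 :> R) = (n %| m)%N.
Definition is_zero_ring (R : pzRingType) : Prop := forall x : R, x = 0.

(* Main.v *)
Require Import Defs.
From HB Require Import structures.
From mathcomp Require Import all_boot all_order all_algebra.

Definition Z1 := unit.
HB.instance Definition _ := Choice.on Z1.
Lemma u_eq (x y : Z1) : x = y. Proof. by case: x; case: y. Qed.
HB.instance Definition _ := @GRing.isZmodule.Build Z1 tt (fun _ => tt) (fun _ _ => tt)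
  (fun _ _ _ => u_eq _ _) (fun _ _ => u_eq _ _) (fun _ => u_eq _ _) (fun _ => u_eq _ _).
HB.instance Definition _ := @GRing.Zmodule_isComPzRing.Build Z1 tt (fun _ _ => tt)
  (fun _ _ _ => u_eq _ _) (fun _ _ => u_eq _ _) (fun _ => u_eq _ _) (fun _ _ _ => u_eq _ _).

Theorem proposition2p1 :
  exists (R1 R2 : comPzRingType),
    is_zero_ring R1 /\
    weakly_tripotent_ring (R1 * R2)%type /\
    ~ (tripotent_ring R2 /\ has_char R2 3).
Proof.
exists Z1, ('Z_2 : comPzRingType); split; first by move=> x; apply: u_eq.
split.
  move=> [x b]; left; rewrite /tripotent_elt.
  have -> : x = tt by case: x.
  by case: b => -[|[|//]] Hb; apply/eqP.
by move=> [_ /(_ 3%N)]; rewrite dvdnn.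
Qed.
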